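(* Let $\mathcal{G}=(\Delta,E)$ be a connected undirected graph, let $K=(k_{ij})\in\mathcal{M}^+(\mathcal{G})$, and let $C$ be a maximal clique of $\mathcal{G}$. Let $\mathcal{G}^*$ be a chordal extension of $\mathcal{G}$, and let $C^*_1,\dots,C^*_M$ be a perfect sequence of the maximal cliques of $\mathcal{G}^*$ with $C\subseteq C^*_1$. Put $S^*_m:=C^*_m\cap(C^*_1\cup\dots\cup C^*_{m-1})$ for $m=2,\dots,M$, $R^*_1:=C^*_1\setminus C$ and $R^*_m:=C^*_m\setminus S^*_m$ for $m=2,\dots,M$. Let $\delta_1,\dots,\delta_N$ ($N=|\Delta\setminus C|$) be an enumeration of $\Delta\setminus C$ that lists first all vertices of $R^*_M$ (in any order), then all vertices of $R^*_{M-1}$, and so on, ending with the vertices of $R^*_1$. Define symmetric matrices $K^{(0)}:=K$ and, for $i=1,\dots,N$, with $\delta:=\delta_i$, $m$ the index with $\delta\in R^*_m$, and $Q:=C^*_m\setminus\{\delta_1,\dots,\delta_i\}$, let $K^{(i)}$ be obtained from $K^{(i-1)}=(k^{(i-1)}_{ab})$ by replacing the block indexed by $Q\times Q$ with $$K^{(i-1)}_{QQ}-\bigl(k^{(i-1)}_{\delta\delta}\bigr)^{-1}K^{(i-1)}_{Q\delta}K^{(i-1)}_{\delta Q},$$ all other entries unchanged. Then $k^{(i-1)}_{\delta_i\delta_i}>0$ for every $i$ (so the procedure is well defined), and $$K^{(N)}_{CC}=\bigl((K^{-1})_{CC}\bigr)^{-1}.$$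
   Context: For a graph $\mathcal{G}=(\Delta,E)$, $\mathcal{M}^+(\mathcal{G})$ denotes the set of $|\Delta|\times|\Delta|$ real symmetric positive definite matrices $K=(k_{ij})$ with $k_{ij}=0$ whenever $i\neq j$ and $\{i,j\}\notin E$. For a matrix $A$ indexed by $\Delta$ and subsets $\Delta_1,\Delta_2\subseteq\Delta$, $A_{\Delta_1\Delta_2}$ denotes the submatrix with rows in $\Delta_1$ and columns in $\Delta_2$; $(K^{-1})_{CC}$ is the $C\times C$ submatrix of the inverse of $K$. A chordal extension of $\mathcal{G}$ is a chordal graph on the same vertex set $\Delta$ whose edge set contains $E$. A sequence $C^*_1,\dots,C^*_M$ of all maximal cliques of a chordal graph is a perfect sequence if for every $m=2,\dots,M$ there is $m'<m$ with $C^*_{m'}\supseteq C^*_m\cap(C^*_1\cup\dots\cup C^*_{m-1})$. A clique is a set of pairwise adjacent vertices. *)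

(* Defs.v *)
(* Vertex set Delta = 'I_n; matrices over a realFieldType R. *)
From HB Require Import structures.
From mathcomp Require Import all_boot all_order all_algebra.
Set Implicit Arguments. Unset Strict Implicit. Unset Printing Implicit Defensive.
Import Order.TTheory GRing.Theory Num.Theory.

Section Graphs.
Variable n : nat.
Implicit Types (e : rel 'I_n) (C D : {set 'I_n}).

Definition simple_graph e := symmetric e /\ irreflexive e.

Definition connected_graph e := forall x y : 'I_n, connect e x y.

Definition is_clique e C := forall x y, x \in C -> y \in C -> x != y -> e x y.

Definition maximal_clique e C :=
  is_clique e C /\ (forall D, is_clique e D -> C \subset D -> D = C).

Definition chordal e :=
  forall s : seq 'I_n, 4 <= size s -> uniq s -> cycle e s ->
    exists x y, [/\ (x \in s) && (y \in s), x != y, y != next s x, x != next s y & e x y].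

Definition chordal_extension e e' :=
  simple_graph e' /\ subrel e e' /\ chordal e'.

(* C^*_m (0-based indexing: Cs`_0 is C^*_1) *)
Definition Cst (Cs : seq {set 'I_n}) m := nth set0 Cs m.

Definition perfect_sequence e' (Cs : seq {set 'I_n}) :=
  [/\ uniq Cs,
      (forall X, X \in Cs <-> maximal_clique e' X) &
      forall m, 0 < m < size Cs ->
        exists2 m', m' < m &
          Cst Cs m :&: \bigcup_(j < m) Cst Cs j \subset Cst Cs m'].

(* S^*_m, for m >= 1 (0-based) *)
Definition Sst (Cs : seq {set 'I_n}) m := Cst Cs m :&: \bigcup_(j < m) Cst Cs j.

Definition Rst C (Cs : seq {set 'I_n}) m :=
  if m == 0 then Cst Cs 0 :\: C else Cst Cs m :\: Sst Cs m.

(* the index m with x \in R^*_m (the R^*_m partition Delta \ C) *)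
Definition blk C (Cs : seq {set 'I_n}) (x : 'I_n) :=
  find (fun m => x \in Rst C Cs m) (iota 0 (size Cs)).
End Graphs.

Section Matrices.
Variables (R : realFieldType) (n : nat).
Local Open Scope ring_scope.

Definition pos_def (K : 'M[R]_n) :=
  K^T = K /\ forall x : 'cV[R]_n, x != 0 -> 0 < (x^T *m K *m x) 0 0.

Definition in_Mplus (e : rel 'I_n) (K : 'M[R]_n) :=
  pos_def K /\ forall i j, i != j -> ~~ e i j -> K i j = 0.

Definition subCC (C : {set 'I_n}) (A : 'M[R]_n) : 'M[R]_#|C| :=
  \matrix_(i < #|C|, j < #|C|) A (enum_val i) (enum_val j).

Definition elim_step (K : 'M[R]_n) (d : 'I_n) (Q : {set 'I_n}) : 'M[R]_n :=
  \matrix_(a, b) if (a \in Q) && (b \in Q)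
                 then K a b - (K d d)^-1 * K a d * K d b else K a b.

(* pre = already eliminated vertices; Q = C^*_m \ {delta_1..delta_i} *)
Fixpoint elim_rec (C : {set 'I_n}) (Cs : seq {set 'I_n}) (K : 'M[R]_n)
   (pre s : seq 'I_n) : 'M[R]_n :=
  match s with
  | [::] => K
  | d :: s' =>
      let pre' := rcons pre d in
      elim_rec C Cs (elim_step K d (Cst Cs (blk C Cs d) :\: [set x in pre'])) pre' s'
  end.

Definition Kseq C Cs (K : 'M[R]_n) (ds : seq 'I_n) (i : nat) :=
  elim_rec C Cs K [::] (take i ds).
End Matrices.

(* Main.v *)
Require Import Defs.
From HB Require Import structures.
From mathcomp Require Import all_boot all_order all_algebra.
From Stdlib Require Import Classical.
Import Order.TTheory GRing.Theory Num.Theory.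
Set Implicit Arguments. Unset Strict Implicit. Unset Printing Implicit Defensive.

Lemma clique_ext n (e' : rel 'I_n) D : is_clique e' D ->
  exists X, maximal_clique e' X /\ D \subset X.
Proof.
move=> HD; have [k Hk] : exists k, #|~: D| < k by exists #|~: D|.+1.
elim: k D HD Hk => [//|k IH] D HD Hk.
case: (classic (exists D', [/\ is_clique e' D', D \subset D' & D' <> D])).
  move=> [D' [cD' sD' nD']].
  have pr : D \proper D'.
    rewrite properEneq sD' andbT; apply/negP => /eqP E; by apply nD'.
  have [X [mX sX]] : exists X, maximal_clique e' X /\ D' \subset X.
    apply: IH => //; rewrite -ltnS; apply: leq_trans Hk; rewrite ltnS.
    by apply: proper_card; rewrite properC.
  by exists X; split => //; apply: subset_trans sX.
move=> nex; exists D; split => //; split => // D' cD' sD'.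
apply: NNPP => ne; apply: nex; by exists D'.
Qed.

Lemma in_some_clique n (e' : rel 'I_n) Cs D : perfect_sequence e' Cs ->
  is_clique e' D -> exists2 j, j < size Cs & D \subset Cst Cs j.
Proof.
move=> [_ HCs _] /clique_ext [X [mX sX]].
have XC : X \in Cs by apply/HCs.
exists (index X Cs); first by rewrite index_mem.
by rewrite /Cst nth_index.
Qed.

Lemma Rst_sub n C (Cs : seq {set 'I_n}) m : Rst C Cs m \subset Cst Cs m.
Proof. rewrite /Rst; case: eqP => [->|_]; apply/subsetP => x; by case/setDP. Qed.

Lemma Rst_first n C (Cs : seq {set 'I_n}) m x k :
  x \in Rst C Cs m -> k < m -> x \notin Cst Cs k.
Proof.
rewrite /Rst; case: eqP => [->|_] //.
move=> /setDP [xm xS] km; apply/negP => xk; apply: (negP xS).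
rewrite /Sst inE xm /=; apply/bigcupP; by exists (Ordinal km).
Qed.

Lemma blk_spec n (C : {set 'I_n}) (e' : rel 'I_n) Cs (x : 'I_n) : perfect_sequence e' Cs -> x \notin C ->
  blk C Cs x < size Cs /\ x \in Rst C Cs (blk C Cs x).
Proof.
move=> Hp xC.
have [j js xj] : exists2 j, j < size Cs & [set x] \subset Cst Cs j.
  apply: in_some_clique Hp _ => a b; rewrite !inE => /eqP -> /eqP ->.
  by rewrite eqxx.
have xj' : x \in Cst Cs j by move/subsetP: xj; apply; rewrite inE.
have ex : exists j, (j < size Cs) && (x \in Cst Cs j) by exists j; rewrite js.
case: (ex_minnP ex) => j0 /andP [j0s xj0] minj.
have hasR : has (fun m => x \in Rst C Cs m) (iota 0 (size Cs)).
  apply/hasP; exists j0; first by rewrite mem_iota.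
  rewrite /Rst; case: eqP => [E|ne]; first by rewrite -E in xj0 *; rewrite inE xC.
  rewrite inE xj0 andbT /Sst inE xj0 /=; apply/bigcupP => [[k _ xk]].
  have := minj k; rewrite xk andbT (ltn_trans (ltn_ord k) j0s) => /(_ isT).
  by rewrite leqNgt ltn_ord.
have := hasR; rewrite has_find size_iota => bs; split => //.
have := nth_find 0 hasR; rewrite nth_iota //.
Qed.

Lemma comb n (e' : rel 'I_n) Cs (C : {set 'I_n}) m d (y : 'I_n) :
  perfect_sequence e' Cs -> simple_graph e' -> C \subset Cst Cs 0 ->
  d \in Rst C Cs m -> (exists2 m'', m'' <= m & y \in Cst Cs m'') ->
  e' d y -> y \in Cst Cs m.
Proof.
move=> Hp [sym irr] HC dR [m'' m''m ym''] edy.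
have [j js sj] : exists2 j, j < size Cs & [set d; y] \subset Cst Cs j.
  apply: in_some_clique Hp _ => a b; rewrite !inE.
  move=> /orP [] /eqP -> /orP [] /eqP ->; rewrite ?eqxx //.
  by rewrite sym.
have dj : d \in Cst Cs j by move/subsetP: sj; apply; rewrite !inE eqxx.
have yj : y \in Cst Cs j by move/subsetP: sj; apply; rewrite !inE eqxx orbT.
have dm : d \in Cst Cs m by move/subsetP: (Rst_sub C Cs m); apply.
elim/ltn_ind: j js dj yj {sj} => j IH js dj yj.
case: (ltngtP j m) => [jm|mj|<- //].
  by have := Rst_first dR jm; rewrite dj.
have [j' j'j Hs] : exists2 j', j' < j &
    Cst Cs j :&: \bigcup_(k < j) Cst Cs k \subset Cst Cs j'.
  by case: Hp => _ _; apply; rewrite js andbT (leq_ltn_trans _ mj).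
apply: (IH j') => //; first exact: ltn_trans js.
  move/subsetP: Hs; apply; rewrite inE dj /=; apply/bigcupP.
  by exists (Ordinal mj).
move/subsetP: Hs; apply; rewrite inE yj /=; apply/bigcupP.
by exists (Ordinal (leq_ltn_trans m''m mj)).
Qed.


Local Open Scope ring_scope.

Definition Inv (R : realFieldType) n (e' : rel 'I_n) (P S : 'M[R]_n) (U : {set 'I_n}) :=
 [/\ forall a c, a \in U -> c \in U -> \sum_(b in U) S a b * P b c = (a == c)%:R,
     forall a b, a \in U -> b \in U -> S a b = S b a &
     forall a b, a \in U -> b \in U -> a != b -> ~~ e' a b -> S a b = 0].

Lemma Inv_pos (R : realFieldType) n (e' : rel 'I_n) (P S : 'M[R]_n) U d :
  P^T = P -> (forall x : 'cV[R]_n, x != 0 -> 0 < (x^T *m P *m x) 0 0) ->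
  Inv e' P S U -> d \in U -> 0 < S d d.
Proof.
move=> Psym Ppd [I1 I3 _] dU.
pose z : 'cV[R]_n := \col_b (if b \in U then S b d else 0).
have Pz : forall c, c \in U -> (P *m z) c 0 = (d == c)%:R.
  move=> c cU; rewrite -(I1 d c dU cU) mxE [RHS]big_mkcond /=.
  apply: eq_bigr => b _; rewrite mxE; case: ifP => bU; last by rewrite mulr0.
  rewrite (I3 b d bU dU) mulrC; congr (_ * _).
  by rewrite -{1}Psym mxE.
have z0 : z != 0.
  apply/eqP => z0; have := Pz d dU; rewrite z0 mulmx0 mxE eqxx => /eqP.
  by rewrite eq_sym oner_eq0.
have := Ppd z z0; rewrite -mulmxA mxE.
have -> : \sum_j z^T 0 j * (P *m z) j 0 = \sum_(c in U) S c d * (d == c)%:R.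
  rewrite [RHS]big_mkcond /=; apply: eq_bigr => c _; rewrite [z^T 0 c]mxE [z c 0]mxE.
  by case: ifP => cU; [rewrite Pz | rewrite mul0r].
rewrite (bigD1 d) //= eqxx mulr1 big1 ?addr0 // => c /andP [_ ne].
by rewrite eq_sym (negbTE ne) mulr0.
Qed.

Lemma Inv_step (R : realFieldType) n (e' : rel 'I_n) (P S : 'M[R]_n) (U U' : {set 'I_n}) (d : 'I_n) (Q : {set 'I_n}) :
  symmetric e' -> Inv e' P S U -> d \in U ->
  (forall x, (x \in U') = (x != d) && (x \in U)) -> 0 < S d d ->
  (forall a, a \in U' -> a \notin Q -> ~~ e' d a) ->
  (forall a b, a \in Q -> b \in Q -> a != b -> e' a b) ->
  Inv e' P (elim_step S d Q) U'.
Proof.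
move=> sym [I1 I3 Isp] dU HU' Sdd HQ Qcl.
have U'U : forall x, x \in U' -> x \in U by move=> x; rewrite HU' => /andP [].
have U'd : forall x, x \in U' -> x != d by move=> x; rewrite HU' => /andP [].
have E : forall a b, a \in U' -> b \in U' ->
    elim_step S d Q a b = S a b - (S d d)^-1 * S a d * S d b.
  move=> a b aU bU; rewrite mxE; case: ifP => // /negbT; rewrite negb_and.
  case/orP => [aQ|bQ].
    rewrite (Isp a d (U'U a aU) dU (U'd a aU)); first by rewrite mulr0 mul0r subr0.
    by rewrite sym HQ.
  rewrite (Isp d b dU (U'U b bU)) ?mulr0 ?subr0 //; first by rewrite eq_sym U'd.
  by rewrite HQ.
have split : forall F : 'I_n -> R, \sum_(b in U) F b = F d + \sum_(b in U') F b.
  move=> F; rewrite (bigD1 d) //=; congr (_ + _); apply: eq_bigl => b.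
  by rewrite HU' andbC.
split.
- move=> a c aU cU.
  rewrite (eq_bigr (fun b => S a b * P b c - (S d d)^-1 * S a d * (S d b * P b c)));
    last by move=> b bU; rewrite E // mulrBl -!mulrA.
  rewrite sumrB -mulr_sumr.
  have h1 := I1 a c (U'U a aU) (U'U c cU); rewrite split in h1.
  have h2 := I1 d c dU (U'U c cU); rewrite split in h2.
  have dc : (d == c) = false by rewrite eq_sym; apply/negbTE/U'd.
  rewrite dc addrC in h2; move/eqP: h2; rewrite addr_eq0 => /eqP ->.
  rewrite mulrN opprK.
  have -> : (S d d)^-1 * S a d * (S d d * P d c) = S a d * P d c.
    by rewrite -mulrA (mulrCA (S a d)) mulKf // gt_eqF.
  by rewrite addrC.
- move=> a b aU bU; rewrite !E // (I3 a b (U'U a aU) (U'U b bU)).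
  rewrite (I3 a d (U'U a aU) dU) (I3 b d (U'U b bU) dU).
  by congr (_ - _); apply: mulrAC.
- move=> a b aU bU ab nab; rewrite mxE; case: ifP => [/andP [aQ bQ]|_].
    by rewrite (Qcl a b aQ bQ ab) in nab.
  by apply: Isp; rewrite ?U'U.
Qed.

Lemma elim_rec_cat (R : realFieldType) n (C : {set 'I_n}) Cs (K : 'M[R]_n) pre s t :
  elim_rec C Cs K pre (s ++ t) = elim_rec C Cs (elim_rec C Cs K pre s) (pre ++ s) t.
Proof.
elim: s K pre => [|d s IH] K pre /=; first by rewrite cats0.
by rewrite IH cat_rcons.
Qed.

Theorem mainTheorem1 (R : realFieldType) (n : nat)
  (e : rel 'I_n) (K : 'M[R]_n) (C : {set 'I_n})
  (e' : rel 'I_n) (Cs : seq {set 'I_n}) (ds : seq 'I_n) :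
  simple_graph e -> connected_graph e ->
  in_Mplus e K ->
  maximal_clique e C ->
  chordal_extension e e' ->
  perfect_sequence e' Cs ->
  C \subset Cst Cs 0 ->
  uniq ds ->
  (forall x, (x \in ds) = (x \notin C)) ->
  pairwise (fun x y => (blk C Cs y <= blk C Cs x)%N) ds ->
  (forall (i : nat) (d : 'I_n), (i < size ds)%N ->
      0 < Kseq C Cs K ds i (nth d ds i) (nth d ds i)) /\
  subCC C (Kseq C Cs K ds (size ds)) = invmx (subCC C (invmx K)).
Proof.
move=> sg conn [[Ksym Kpd] Ksp] mC [sg' [sub chord]] Hp HC uds Hds Hpw.
have Kunit : K \in unitmx.
  rewrite unitmxE unitfE; apply/negP => /det0P [v v0 vK].
  have vT0 : v^T != 0.
    by apply/eqP => h; move/eqP: v0; apply; rewrite -[v]trmxK h trmx0.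
  by have := Kpd _ vT0; rewrite trmxK vK mul0mx mxE ltxx.
have Psym : (invmx K)^T = invmx K by rewrite trmx_inv Ksym.
have Ppd : forall x : 'cV[R]_n, x != 0 -> 0 < (x^T *m invmx K *m x) 0 0.
  move=> x x0.
  have y0 : invmx K *m x != 0.
    apply: contraNneq x0 => y0; by rewrite -(mulKVmx Kunit x) y0 mulmx0.
  have := Kpd _ y0.
  rewrite trmx_mul Psym -!mulmxA (mulmxA K) (mulmxV Kunit) mul1mx.
  by rewrite mulmxA.
have Hsym : symmetric e' by case: sg'.
have base : Inv e' (invmx K) K (~: [set x in [::]]).
  split.
  - move=> a c _ _; have := congr1 (fun M : 'M[R]_n => M a c) (mulmxV Kunit).
    rewrite !mxE => <-; apply: eq_bigl => b; by rewrite !inE.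
  - by move=> a b _ _; rewrite -{1}Ksym mxE.
  - move=> a b _ _ ab nab; apply: Ksp ab _; apply/negP => eab.
    by move: nab; rewrite (sub a b eab).
have inv : forall i, (i <= size ds)%N ->
    Inv e' (invmx K) (Kseq C Cs K ds i) (~: [set x in take i ds]).
  case Eds: ds => [|x0 ds0].
    by move=> i; rewrite leqn0 => /eqP ->.
  rewrite -Eds; elim => [_|i IH Hi]; first by rewrite /Kseq take0; exact: base.
  set dl := nth x0 ds i.
  have Ekseq : Kseq C Cs K ds i.+1 = elim_step (Kseq C Cs K ds i) dl
      (Cst Cs (blk C Cs dl) :\: [set x in rcons (take i ds) dl]).
    by rewrite /Kseq (take_nth x0 Hi) -cats1 elim_rec_cat /= cats1.
  have dnC : dl \notin C by rewrite -Hds mem_nth.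
  have [bs dR] := blk_spec Hp dnC.
  have dU : dl \in ~: [set x in take i ds].
    by rewrite !inE in_take ?mem_nth // index_uniq // ltnn.
  rewrite Ekseq; apply: (Inv_step Hsym (IH (ltnW Hi)) dU).
  - by move=> x; rewrite (take_nth x0 Hi) !inE mem_rcons in_cons negb_or.
  - exact: Inv_pos Psym Ppd (IH (ltnW Hi)) dU.
  - move=> a aU aQ; apply/negP => ed.
    have aU' : a \notin rcons (take i ds) dl.
      by move: aU; rewrite (take_nth x0 Hi) !inE.
    have ex : exists2 m'', (m'' <= blk C Cs dl)%N & a \in Cst Cs m''.
      case aD: (a \in ds).
        have anC : a \notin C by rewrite -Hds.
        have [_ aR] := blk_spec Hp anC.
        exists (blk C Cs a); last by move/subsetP: (Rst_sub C Cs (blk C Cs a)); apply.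
        have kds : (index a ds < size ds)%N by rewrite index_mem.
        have ik : (i < index a ds)%N.
          by move: aU'; rewrite -(take_nth x0 Hi) in_take // -leqNgt.
        have := (elimT (pairwiseP x0) Hpw) i (index a ds).
        rewrite !inE /= nth_index //.
        by apply.
      exists 0%N => //; move/subsetP: HC; apply.
      by move: aD; rewrite Hds => /negbFE.
    have := comb Hp sg' HC dR ex ed => am.
    by move: aQ; rewrite !inE am aU' andbT.
  - move=> a b aQ bQ ab.
    have Cm : maximal_clique e' (Cst Cs (blk C Cs dl)).
      by case: Hp => _ H _; apply/H; rewrite /Cst mem_nth.
    case: Cm => cl _; apply: cl ab.
      by case/setDP: aQ.
    by case/setDP: bQ.
have invN := inv _ (leqnn _).
have UC : forall x, (x \in ~: [set x in take (size ds) ds]) = (x \in C).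
  by move=> x; rewrite take_size !inE Hds negbK.
split.
  move=> i d Hi; apply: Inv_pos Psym Ppd (inv i (ltnW Hi)) _.
  by rewrite !inE in_take ?mem_nth // index_uniq // ltnn.
have AB : subCC C (Kseq C Cs K ds (size ds)) *m subCC C (invmx K) = 1%:M.
  case: invN => I1 _ _.
  apply/matrixP => i k; rewrite !mxE.
  under eq_bigr do rewrite !mxE.
  rewrite -(big_enum_val (A := mem C)
    (fun b => Kseq C Cs K ds (size ds) (enum_val i) b * invmx K b (enum_val k))).
  rewrite (eq_bigl (fun b => b \in ~: [set x in take (size ds) ds])); last first.
    by move=> b; rewrite UC.
  rewrite I1 ?UC ?enum_valP //.
  by rewrite (inj_eq enum_val_inj).
have [_ Bu] := mulmx1_unit AB.
by rewrite -[LHS]mulmx1 -(mulmxV Bu) mulmxA AB mul1mx.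
Qed.
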